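(* Assume (A1)–(A3). If $m_1<0$, then for every $\theta>0$ there exist $C>0$ and $\delta>0$ such that for all $(i,j)\in\mathbb N\times\mathbb Z$, $k\in\mathbb N$ and $n\in\mathbb N$, \[\mathbb P_{(i,j)}(T_1^k\ge n)\le C\exp(\theta i-\delta n),\] where $T_1^k=\inf\{n>0: X_1(n)\le\max(k_0-1,k)\}$.
   Context: Let $\mathbb N=\{0,1,2,\dots\}$ and fix an integer $k_0\ge1$. Let $\mu$, $\mu'_j$ ($0\le j<k_0$), $\mu''_i$ ($0\le i<k_0$), $\mu_{ij}$ ($0\le i,j<k_0$) be probability measures on $\mathbb Z^2$. The random walk $Z=(X(n),Y(n))$ on $\mathbb N^2$ has transition probabilities $p((i,j)\to(i',j'))$ equal to $\mu(i'-i,j'-j)$ if $i,j\ge k_0$; $\mu'_j(i'-i,j'-j)$ if $i\ge k_0$, $0\le j<k_0$; $\mu''_i(i'-i,j'-j)$ if $0\le i<k_0$, $j\ge k_0$; $\mu_{ij}(i'-i,j'-j)$ if $0\le i,j<k_0$. Assumptions: (A1) $\mu(a,b)=0$ if $a<-k_0$ or $b<-k_0$; $\mu'_j(a,b)=0$ if $a<-k_0$ or $b<-j$; $\mu''_i(a,b)=0$ if $b<-k_0$ or $a<-i$; $\mu_{ij}(a,b)=0$ if $a<-i$ or $b<-j$. (A2) There are $\delta,\gamma,C>0$ with $\sup_{(i,j)\in\mathbb N^2}\mathbb E_{(i,j)}[\exp(\delta(X(1)-i)+\gamma(Y(1)-j))]\le C$. (A3) $Z_0,Z_1,Z_2,Z$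 are irreducible on their state spaces. $Z_0$: random walk on $\mathbb Z^2$ with increment law $\mu$; $m_1=\sum a\mu(a,b)$. $Z_1=(X_1,Y_1)$: Markov chain on $\mathbb N\times\mathbb Z$ with transitions $\mu(i'-i,j'-j)$ from $(i,j)$ if $i\ge k_0$ and $\mu''_i(i'-i,j'-j)$ if $0\le i<k_0$; $\mathbb P_{(i,j)}$ is its law from $(i,j)$. $Z_2$: Markov chain on $\mathbb Z\times\mathbb N$ with transitions $\mu$ if $j\ge k_0$ and $\mu'_j$ if $0\le j<k_0$. *)

(* Defs.v *)
From HB Require Import structures.
From mathcomp Require Import all_boot all_order all_algebra.
From mathcomp Require Import all_classical all_reals all_analysis.
Set Implicit Arguments. Unset Strict Implicit. Unset Printing Implicit Defensive.
Import Order.TTheory GRing.Theory Num.Theory.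
Local Open Scope classical_set_scope.
Local Open Scope ring_scope.

Section Defs.
Variable R : realType.

Definition is_prob (nu : int -> int -> R) : Prop :=
  (forall a b, 0 <= nu a b) /\
  (\esum_(ab in [set: int * int]) (nu ab.1 ab.2)%:E = 1%E).

Fixpoint nstep (S : choiceType) (P : S -> S -> R) (n : nat) (x y : S) : \bar R :=
  match n with
  | O => (if x == y then 1 else 0)%:E
  | m.+1 => \esum_(z in [set: S]) ((P x z)%:E * nstep P m z y)%E
  end.

Definition irreducible (S : choiceType) (P : S -> S -> R) : Prop :=
  forall x y : S, exists n, (0 < nstep P n x y)%E.

Variables (k0 : nat) (mu : int -> int -> R) (mu' mu'' : nat -> int -> int -> R)
  (muij : nat -> nat -> int -> int -> R).

Definition kerZ (x y : nat * nat) : R :=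
  let a := (y.1%:Z - x.1%:Z)%R in let b := (y.2%:Z - x.2%:Z)%R in
  if (k0 <= x.1)%N then (if (k0 <= x.2)%N then mu a b else mu' x.2 a b)
  else (if (k0 <= x.2)%N then mu'' x.1 a b else muij x.1 x.2 a b).

Definition kerZ0 (x y : int * int) : R := mu (y.1 - x.1) (y.2 - x.2).

Definition kerZ1 (x y : nat * int) : R :=
  let a := (y.1%:Z - x.1%:Z)%R in let b := (y.2 - x.2)%R in
  if (k0 <= x.1)%N then mu a b else mu'' x.1 a b.

Definition kerZ2 (x y : int * nat) : R :=
  let a := (y.1 - x.1)%R in let b := (y.2%:Z - x.2%:Z)%R in
  if (k0 <= x.2)%N then mu a b else mu' x.2 a b.

(* m1 = sum_{a,b} a mu(a,b), as (positive part) - (negative part) *)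
Definition m1 : \bar R :=
  (\esum_(ab in [set: int * int]) (Num.max 0 (ab.1%:~R * mu ab.1 ab.2))%:E
   - \esum_(ab in [set: int * int]) (Num.max 0 (- (ab.1%:~R * mu ab.1 ab.2)))%:E)%E.

(* avoid K n x = P_x(X_1(1) > K, ..., X_1(n) > K) for the chain Z1 *)
Fixpoint avoid1 (K : nat) (n : nat) (x : nat * int) : \bar R :=
  match n with
  | O => 1%E
  | m.+1 => \esum_(y in [set: nat * int])
              ((kerZ1 x y)%:E * (if (K < y.1)%N then avoid1 K m y else 0%E))%E
  end.

(* P_{(i,j)}(T_1^k >= n), T_1^k = inf{n>0 : X_1(n) <= max(k0-1,k)} *)
Definition probT1_ge (k n : nat) (x : nat * int) : \bar R :=
  avoid1 (maxn (k0.-1) k) n.-1 x.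

End Defs.

(* Main.v *)
Require Import Defs.
From HB Require Import structures.
From mathcomp Require Import all_boot all_order all_algebra.
From mathcomp Require Import all_classical all_reals all_analysis.
From mathcomp Require Import ring lra zify.
Import Order.TTheory GRing.Theory Num.Theory.
Local Open Scope classical_set_scope.
Local Open Scope ring_scope.
Section G.
Context {R : realType} {T : choiceType}.
Local Open Scope ereal_scope.

Lemma esumZ_le (I : set T) (c : R) (f : T -> \bar R) :
  (0 <= c)%R -> (forall i, 0 <= f i) ->
  \esum_(i in I) (c%:E * f i) <= c%:E * \esum_(i in I) f i.
Proof.
move=> c0 f0; apply: ge_ereal_sup => _ [X [finX XI] <-] /=.
rewrite -ge0_mule_fsumr//; apply: lee_wpmul2l; first by rewrite lee_fin.
by apply: ereal_sup_ubound; exists X.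
Qed.

Lemma esumZ (I : set T) (c : R) (f : T -> \bar R) :
  (0 < c)%R -> (forall i, 0 <= f i) ->
  \esum_(i in I) (c%:E * f i) = c%:E * \esum_(i in I) f i.
Proof.
move=> c0 f0; apply/eqP; rewrite eq_le esumZ_le //=; last exact: ltW.
have -> : \esum_(i in I) f i = \esum_(i in I) (c^-1%:E * (c%:E * f i)).
  by apply: eq_esum => i _; rewrite muleA -EFinM mulVf ?gt_eqF// mul1e.
apply: (@le_trans _ _ (c%:E * (c^-1%:E * \esum_(i in I) (c%:E * f i)))).
  apply: lee_wpmul2l; first by rewrite lee_fin ltW.
  apply: esumZ_le; first by rewrite invr_ge0 ltW.
  by move=> i; rewrite mule_ge0// lee_fin ltW.
by rewrite muleA -EFinM mulfV ?gt_eqF// mul1e.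
Qed.

Lemma esum_sub_le (I : set T) (f : T -> \bar R) :
  (forall i, 0 <= f i) -> \esum_(i in I) f i <= \esum_(i in [set: T]) f i.
Proof.
move=> f0; rewrite esum_mkcond; apply: le_esum => i _; by case: ifP.
Qed.

End G.

Section G2.
Context {R : realType} {S T : choiceType}.
Local Open Scope ereal_scope.

Lemma esum_inj_le (e : S -> T) (f : T -> \bar R) :
  injective e -> (forall i, 0 <= f i) ->
  \esum_(x in [set: S]) f (e x) <= \esum_(y in [set: T]) f y.
Proof.
move=> ie f0; rewrite -(esum_image setT e f); last by move=> x y _ _; apply: ie.
exact: esum_sub_le.
Qed.

Lemma esum_inj_eq (e : S -> T) (f : T -> \bar R) :
  injective e -> (forall y, (forall x, e x <> y) -> f y = 0) ->
  \esum_(y in [set: T]) f y = \esum_(x in [set: S]) f (e x).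
Proof.
move=> ie fz; rewrite -(esum_image setT e f); last by move=> x y _ _; apply: ie.
rewrite [RHS]esum_mkcond; apply: eq_esum => y _.
case: ifP => // /negbT; rewrite notin_setE /= => H.
by apply: fz => x ex; apply: H; exists x.
Qed.

End G2.

Section RA.
Context {R : realType}.
Implicit Types x y a : R.

Lemma exp_quad x : expR x <= 1 + x + 4 * x^+2 * expR (Num.max x 0).
Proof.
have e1 := expR_ge1Dx x; have e2 := expR_ge1Dx (- x).
have ep := expR_gt0 x.
have em : expR x * expR (- x) = 1 by rewrite expRxMexpNx_1.
case: (lerP x (1/2)) => hx.
  have hm : 1 <= expR (Num.max x 0) by rewrite -expR0 ler_expR le_max lexx orbT.
  have hx2 : 0 <= x^+2 by rewrite sqr_ge0.
  have : 1 + x + 4 * x^+2 <= 1 + x + 4 * x^+2 * expR (Num.max x 0).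
    rewrite lerD2l ler_peMr //; by rewrite mulr_ge0.
  suff : expR x <= 1 + x + 4 * x^+2 by lra.
  (* expR x * (1 - x) <= expR x * expR (-x) = 1 *)
  have h1 : expR x * (1 - x) <= 1.
    rewrite -em ler_pM2l //; lra.
  have h2 : 1 <= (1 - x) * (1 + x + 4 * x^+2).
    have -> : (1 - x) * (1 + x + 4 * x^+2) = 1 + x^+2 * (3 - 4 * x) by rewrite !expr2; ring.
    rewrite lerDl mulr_ge0 //; lra.
  nra.
have -> : Num.max x 0 = x by rewrite max_l //; lra.
have : 1 <= 4 * x^+2 by rewrite expr2; nra.
nra.
Qed.

Lemma sq_exp_le (dl a : R) : 0 < dl -> 0 <= a ->
  a^+2 * expR (dl * a / 2) <= 16 / dl^+2 * expR (dl * a).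
Proof.
move=> d0 a0.
have e4 := expR_ge1Dx (dl * a / 4).
have h : expR (dl * a / 2) = expR (dl * a / 4) ^+ 2.
  by rewrite expr2 -expRD; congr expR; field.
have h2 : expR (dl * a) = expR (dl * a / 2) * expR (dl * a / 2).
  by rewrite -expRD; congr expR; field.
have t0 : 0 <= dl * a / 4 by rewrite divr_ge0 // mulr_ge0 // ltW.
have : (dl * a / 4) ^+ 2 <= expR (dl * a / 2).
  rewrite h !expr2; nra.
move=> H; rewrite h2.
have c0 : 0 < 16 / dl^+2 by rewrite divr_gt0 // exprn_gt0.
have ha : a^+2 <= 16 / dl^+2 * expR (dl * a / 2).
  have -> : a^+2 = 16 / dl^+2 * (dl * a / 4) ^+ 2.
    by rewrite !expr2; field; rewrite gt_eqF.
  by rewrite ler_pM2l.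
rewrite mulrA ler_pM2r ?expR_gt0 //.
Qed.

Lemma H_bound (k dl lam a : R) : 0 < dl -> 0 <= lam -> lam <= dl / 2 ->
  0 <= k -> - k <= a ->
  a^+2 * expR (lam * Num.max a 0) <= k^+2 + 16 / dl^+2 * expR (dl * a).
Proof.
move=> d0 l0 l1 k0 ak.
have eg := expR_ge0 (dl * a).
have c0 : 0 <= 16 / dl^+2 by rewrite divr_ge0 // exprn_ge0 // ltW.
case: (lerP 0 a) => ha.
  idtac.
  have e1 : expR (lam * a) <= expR (dl * a / 2).
    by rewrite ler_expR; nra.
  have := sq_exp_le _ _ d0 ha.
  have a2 : 0 <= a^+2 by rewrite sqr_ge0.
  have : a^+2 * expR (lam * a) <= a^+2 * expR (dl * a / 2) by rewrite ler_wpM2l.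
  have : 0 <= 16 / dl ^+ 2 * expR (dl * a) by rewrite mulr_ge0.
  have : 0 <= k^+2 by rewrite sqr_ge0.
  lra.
rewrite mulr0 expR0 mulr1.
have : a^+2 <= k^+2 by rewrite !expr2; nra.
have : 0 <= 16 / dl ^+ 2 * expR (dl * a) by rewrite mulr_ge0.
lra.
Qed.

Lemma key_pt (k dl lam m a : R) : 0 < dl -> 0 <= lam -> lam <= dl / 2 ->
  0 <= k -> 0 <= m -> (m != 0 -> - k <= a) ->
  m * expR (lam * a) + lam * Num.max 0 (- (a * m)) <=
  m + lam * Num.max 0 (a * m) + 4 * lam^+2 * (m * (k^+2 + 16 / dl^+2 * expR (dl * a))).
Proof.
move=> d0 l0 l1 k0 m0 hk.
have [->|mn0] := eqVneq m 0.
  by rewrite !(mul0r, mulr0, oppr0, maxxx, addr0, add0r).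
have ak := hk mn0.
have hq := exp_quad (lam * a).
have hmx : Num.max (lam * a) 0 = lam * Num.max a 0.
  case: (lerP 0 a) => ha; first by rewrite !max_l // mulr_ge0.
  by rewrite mulr0 max_r //; nra.
rewrite hmx in hq.
have hH := H_bound _ _ _ _ d0 l0 l1 k0 ak.
have e0 : 0 <= expR (lam * Num.max a 0) := expR_ge0 _.
have hq2 : (lam * a)^+2 * expR (lam * Num.max a 0) = lam^+2 * (a^+2 * expR (lam * Num.max a 0)).
  by rewrite exprMn mulrA.
have hmm : Num.max 0 (a * m) - Num.max 0 (- (a * m)) = a * m.
  by case: (lerP 0 (a * m)) => h; case: (lerP 0 (- (a * m))) => h2; lra.
have l2 : 0 <= lam^+2 by rewrite sqr_ge0.
have hX : lam^+2 * (a^+2 * expR (lam * Num.max a 0)) <= lam^+2 * (k^+2 + 16 / dl^+2 * expR (dl * a)).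
  by rewrite ler_wpM2l.
have : m * expR (lam * a) <= m * (1 + lam * a + 4 * (lam^+2 * (k^+2 + 16 / dl^+2 * expR (dl * a))))
  by rewrite ler_wpM2l //; lra.
nra.
Qed.

End RA.

Definition Phi {R : realType} (nu : int -> int -> R) (lam : R) : \bar R :=
  \esum_(ab in [set: int * int]) (nu ab.1 ab.2 * expR (lam * ab.1%:~R))%:E.

Lemma intrnat {R : realType} (n : nat) : (n%:Z)%:~R = n%:R :> R.
Proof. by []. Qed.

Section Main.
Context (R : realType) (k0 : nat) (mu : int -> int -> R) (mu' mu'' : nat -> int -> int -> R)
  (muij : nat -> nat -> int -> int -> R)
  (mu0 : forall a b, 0 <= mu a b)
  (mu''0 : forall i a b, (i < k0)%N -> 0 <= mu'' i a b).

Definition krow (i : nat) := if (k0 <= i)%N then mu else mu'' i.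

Lemma krow0 i a b : 0 <= krow i a b.
Proof. rewrite /krow; case: leqP => h; [exact: mu0 | exact: mu''0]. Qed.

Lemma kerZ1E x y : kerZ1 k0 mu mu'' x y = krow x.1 (y.1%:Z - x.1%:Z) (y.2 - x.2).
Proof. by rewrite /kerZ1 /krow; case: ifP. Qed.

Lemma kerZ10 x y : 0 <= kerZ1 k0 mu mu'' x y.
Proof. by rewrite kerZ1E krow0. Qed.

Lemma L1 (x : nat * int) (lam : R) :
  (\esum_(y in [set: nat * int])
     (kerZ1 k0 mu mu'' x y * expR (lam * (y.1%:R - x.1%:R)))%:E
   <= Phi (krow x.1) lam)%E.
Proof.
pose e (y : nat * int) : int * int := (y.1%:Z - x.1%:Z, y.2 - x.2).
have ie : injective e.
  move=> [y1 y2] [z1 z2] [] /= h1 h2.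
  have -> : y1 = z1 by apply/eqP; rewrite -eqz_nat; apply/eqP; lra.
  by have -> : y2 = z2 by lra.
rewrite /Phi; apply: le_trans (@esum_inj_le R _ _ e (fun ab => (krow x.1 ab.1 ab.2 * expR (lam * ab.1%:~R))%:E) ie _); last first.
  by move=> i; rewrite lee_fin mulr_ge0 ?krow0 ?expR_ge0.
apply: le_esum => y _; rewrite /e /= kerZ1E intrB.
by [].
Qed.

Lemma L2 (nu : int -> int -> R) (i0 : nat) (dl gm C lam : R) :
  (i0 <= k0)%N -> 0 < dl -> 0 < gm -> 0 <= lam -> lam <= dl ->
  (forall a b, 0 <= nu a b) ->
  (forall a b, (a < - i0%:Z \/ b < - k0%:Z) -> nu a b = 0) ->
  (forall y : nat * nat, kerZ k0 mu mu' mu'' muij (i0, k0) y = nu (y.1%:Z - i0%:Z) (y.2%:Z - k0%:Z)) ->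
  (\esum_(y in [set: nat * nat])
     (kerZ k0 mu mu' mu'' muij (i0, k0) y *
      expR (dl * (y.1%:R - i0%:R) + gm * (y.2%:R - k0%:R)))%:E <= C%:E)%E ->
  (Phi nu lam <= (expR ((dl + gm) * k0%:R) * C)%:E)%E.
Proof.
move=> hi d0 g0 l0 l1 nu0 nuz hker hA.
pose e (y : nat * nat) : int * int := (y.1%:Z - i0%:Z, y.2%:Z - k0%:Z).
have ie : injective e.
  move=> [y1 y2] [z1 z2] [] /= h1 h2.
  move/addIr: h1 => [] ->.
  by move/addIr: h2 => [] ->.
rewrite /Phi (@esum_inj_eq R _ _ e (fun ab => (nu ab.1 ab.2 * expR (lam * ab.1%:~R))%:E) ie); last first.
  move=> [a b] /= hn; rewrite nuz ?mul0r //.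
  case: (ltrP a (- i0%:Z)) => ha; first by left.
  case: (ltrP b (- k0%:Z)) => hb; first by right.
  exfalso; apply: (hn (absz (a + i0%:Z), absz (b + k0%:Z))).
  rewrite /e /= !gez0_abs.
  - by congr pair; rewrite addrK.
  - by rewrite -lerBlDr sub0r.
  - by rewrite -lerBlDr sub0r.
have c0 : 0 < expR ((dl + gm) * k0%:R) := expR_gt0 _.
apply: (@le_trans _ _ (\esum_(y in [set: nat * nat]) ((expR ((dl + gm) * k0%:R))%:E *
     (kerZ k0 mu mu' mu'' muij (i0, k0) y *
      expR (dl * (y.1%:R - i0%:R) + gm * (y.2%:R - k0%:R)))%:E))%E).
  apply: le_esum => y _; rewrite /e /= hker -EFinM lee_fin intrB !intrnat.
  rewrite mulrCA ler_wpM2l // -expRD ler_expR.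
  have : (0 <= y.1%:R :> R) by rewrite ler0n.
  have : (0 <= y.2%:R :> R) by rewrite ler0n.
  have : (i0%:R <= k0%:R :> R) by rewrite ler_nat.
  have : (0 <= i0%:R :> R) by rewrite ler0n.
  move=> hi0 hik hy2 hy1.
  have g2 : 0 <= gm * y.2%:R by rewrite mulr_ge0 // ltW.
  have dk : 0 <= dl * (y.1%:R - i0%:R + k0%:R) by apply: mulr_ge0; [exact: ltW | lra].
  have [hy|hy] := lerP (i0%:R : R) (y.1%:R : R).
    have : 0 <= (dl - lam) * (y.1%:R - i0%:R) by apply: mulr_ge0; lra.
    have : 0 <= dl * k0%:R by apply: mulr_ge0; [exact: ltW | exact: ler0n].
    move=> h1 h2; lra.
  have : lam * (y.1%:R - i0%:R) <= 0 by rewrite -(mulr0 lam) ler_wpM2l //; lra.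
  move=> h1; lra.
apply: le_trans (esumZ_le _ _ _ (ltW c0) _) _.
  by move=> y; rewrite lee_fin mulr_ge0 ?expR_ge0 // hker nu0.
by rewrite [X in (_ <= X)%E]EFinM; apply: lee_wpmul2l => //; rewrite lee_fin ltW.
Qed.

End Main.

Section Drift.
Context (R : realType) (k0 : nat) (mu : int -> int -> R)
  (Pmu : is_prob mu)
  (A1mu : forall a b, (a < - k0%:Z \/ b < - k0%:Z) -> mu a b = 0).

Let mu0 : forall a b, 0 <= mu a b := Pmu.1.

Lemma mu_supp a b : mu a b != 0 -> (- k0%:R <= a%:~R :> R).
Proof.
move=> h; case: (ltrP a (- k0%:Z)) => ha.
  by move: h; rewrite A1mu ?eqxx //; left.
by rewrite -intrnat -intrN ler_int.
Qed.

Definition Pp := (\esum_(ab in [set: int * int]) (Num.max 0 (ab.1%:~R * mu ab.1 ab.2))%:E)%E.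
Definition Nn := (\esum_(ab in [set: int * int]) (Num.max 0 (- (ab.1%:~R * mu ab.1 ab.2)))%:E)%E.

Lemma Nn_le : (Nn <= k0%:R%:E)%E.
Proof.
rewrite /Nn.
apply: (@le_trans _ _ (\esum_(ab in [set: int * int]) (k0%:R%:E * (mu ab.1 ab.2)%:E))%E).
  apply: le_esum => [[a b]] _ /=; rewrite -EFinM lee_fin.
  have [->|h] := eqVneq (mu a b) 0.
    by rewrite mulr0 oppr0 maxxx.
  have := mu_supp _ _ h; have := mu0 a b => m0 hs.
  have hk : 0 <= k0%:R :> R by rewrite ler0n.
  by case: (lerP 0 (- (a%:~R * mu a b))) => _; nra.
apply: (@le_trans _ _ (k0%:R%:E * \esum_(ab in [set: int * int]) (mu ab.1 ab.2)%:E)%E); first apply: esumZ_le.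
- by rewrite ler0n.
- by move=> i; rewrite lee_fin mu0.
by rewrite Pmu.2 mule1.
Qed.

Lemma PN_fin : (m1 mu < 0)%E -> exists p n : R, [/\ 0 <= p, p < n, Pp = p%:E & Nn = n%:E].
Proof.
rewrite /m1 -/Pp -/Nn => hm.
have P0 : (0 <= Pp)%E by apply: esum_ge0 => ab _; rewrite lee_fin le_max lexx.
have N0 : (0 <= Nn)%E by apply: esum_ge0 => ab _; rewrite lee_fin le_max lexx.
have := Nn_le; move: hm P0 N0.
case: Nn => [n| |] //; case: Pp => [p| |] // hm P0 N0 _.
exists p, n; split => //.
by move: hm; rewrite -EFinB lte_fin subr_lt0.
Qed.

Lemma drift_sum (dl Bd lam : R) : 0 < dl -> 0 < lam -> lam <= dl / 2 ->
  (Phi mu dl <= Bd%:E)%E ->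
  (Phi mu lam + lam%:E * Nn <=
   1 + lam%:E * Pp + (4 * lam^+2)%:E * (k0%:R^+2 + 16 / dl^+2 * Bd)%:E)%E.
Proof.
move=> d0 l0 l1 hB.
have k0p : 0 <= k0%:R :> R by rewrite ler0n.
have c16 : 0 <= 16 / dl^+2 :> R by rewrite divr_ge0 // exprn_ge0 // ltW.
have mx0 : forall x : R, 0 <= Num.max 0 x by move=> x; rewrite le_max lexx.
have R3 : forall ab : int * int, 0 <= 4 * lam^+2 *
    (mu ab.1 ab.2 * (k0%:R^+2 + 16 / dl^+2 * expR (dl * ab.1%:~R))).
  move=> ab; apply: mulr_ge0; first by apply: mulr_ge0; [lra | exact: sqr_ge0].
  apply: mulr_ge0 => //; apply: addr_ge0; first exact: sqr_ge0.
  by apply: mulr_ge0 => //; exact: expR_ge0.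
have E1 : (Phi mu lam + lam%:E * Nn = \esum_(ab in [set: int * int])
    ((mu ab.1 ab.2 * expR (lam * ab.1%:~R))%:E +
     (lam * Num.max 0 (- (ab.1%:~R * mu ab.1 ab.2)))%:E))%E.
  rewrite esumD; first last.
  - by move=> ab _; rewrite lee_fin mulr_ge0 // ltW.
  - by move=> ab _; rewrite lee_fin mulr_ge0 ?expR_ge0.
  congr (_ + _)%E; rewrite /Nn -(esumZ _ _ _ l0); last by move=> ab; rewrite lee_fin.
  by apply: eq_esum => ab _; rewrite EFinM.
have E2 : (\esum_(ab in [set: int * int])
    ((mu ab.1 ab.2)%:E + (lam * Num.max 0 (ab.1%:~R * mu ab.1 ab.2))%:E +
     (4 * lam^+2 * (mu ab.1 ab.2 * (k0%:R^+2 + 16 / dl^+2 * expR (dl * ab.1%:~R))))%:E)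
   = 1 + lam%:E * Pp + \esum_(ab in [set: int * int])
     (4 * lam^+2 * (mu ab.1 ab.2 * (k0%:R^+2 + 16 / dl^+2 * expR (dl * ab.1%:~R))))%:E)%E.
  rewrite esumD; first last.
  - by move=> ab _; rewrite lee_fin R3.
  - by move=> ab _; rewrite adde_ge0 // lee_fin ?mulr_ge0 // ltW.
  rewrite esumD; first last.
  - by move=> ab _; rewrite lee_fin mulr_ge0 // ltW.
  - by move=> ab _; rewrite lee_fin.
  rewrite Pmu.2 /Pp -(esumZ _ _ _ l0); last by move=> ab; rewrite lee_fin.
  by congr (_ + _ + _)%E; apply: eq_esum => ab _; rewrite EFinM.
rewrite E1; apply: le_trans (_ : _ <= \esum_(ab in [set: int * int])
    ((mu ab.1 ab.2)%:E + (lam * Num.max 0 (ab.1%:~R * mu ab.1 ab.2))%:E +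
     (4 * lam^+2 * (mu ab.1 ab.2 * (k0%:R^+2 + 16 / dl^+2 * expR (dl * ab.1%:~R))))%:E))%E _.
  apply: le_esum => [[a b]] _ /=; rewrite -!EFinD lee_fin.
  apply: key_pt => //; first exact: ltW.
  exact: mu_supp.
rewrite E2 leeD2l //.
apply: (@le_trans _ _ ((4 * lam^+2)%:E * \esum_(ab in [set: int * int])
   (mu ab.1 ab.2 * (k0%:R^+2 + 16 / dl^+2 * expR (dl * ab.1%:~R)))%:E))%E.
  under eq_esum do rewrite EFinM.
  apply: esumZ_le; first by rewrite mulr_ge0 // exprn_ge0 // ltW.
  move=> ab; rewrite lee_fin mulr_ge0 // addr_ge0 ?exprn_ge0 //.
  by rewrite mulr_ge0 ?expR_ge0.
apply: lee_wpmul2l; first by rewrite lee_fin mulr_ge0 // exprn_ge0 // ltW.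
rewrite (@eq_esum _ _ _ _ (fun ab => (k0%:R^+2)%:E * (mu ab.1 ab.2)%:E +
   (16 / dl^+2)%:E * (mu ab.1 ab.2 * expR (dl * ab.1%:~R))%:E)%E); last first.
  by move=> ab _; rewrite -!EFinM -EFinD; congr EFin; ring.
rewrite esumD; first last.
- by move=> ab _; rewrite -EFinM lee_fin; apply: mulr_ge0 => //; apply: mulr_ge0 => //; exact: expR_ge0.
- by move=> ab _; rewrite -EFinM lee_fin; apply: mulr_ge0 => //; exact: sqr_ge0.
rewrite EFinD; apply: leeD.
  apply: le_trans (esumZ_le _ _ _ _ _) _; first by rewrite exprn_ge0.
    by move=> ab; rewrite lee_fin.
  by rewrite Pmu.2 mule1.
apply: le_trans (esumZ_le _ _ _ _ _) _ => //.
  by move=> ab; rewrite lee_fin mulr_ge0 ?expR_ge0.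
by rewrite [X in (_ <= X)%E]EFinM; apply: lee_wpmul2l; [rewrite lee_fin | exact: hB].
Qed.

Lemma drift_exists (dl Bd theta : R) : 0 < dl -> 0 < theta ->
  (m1 mu < 0)%E -> (Phi mu dl <= Bd%:E)%E ->
  exists lam rho : R, [/\ 0 < lam, lam <= theta, lam <= dl / 2, 0 < rho /\ rho < 1
     & (Phi mu lam <= rho%:E)%E].
Proof.
move=> d0 t0 hm hB.
have [p [n [p0 pn hP hN]]] := PN_fin hm.
have Phi0 : forall l, (0 <= Phi mu l)%E.
  by move=> l; apply: esum_ge0 => ab _; rewrite lee_fin mulr_ge0 ?expR_ge0.
have B0 : 0 <= Bd by rewrite -lee_fin; apply: le_trans hB.
have c16 : 0 <= 16 / dl^+2 :> R by rewrite divr_ge0 // exprn_ge0 // ltW.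
set s := k0%:R^+2 + 16 / dl^+2 * Bd.
have s0 : 0 <= s by rewrite addr_ge0 ?sqr_ge0 // mulr_ge0.
have s1 : 0 < 8 * (s + 1) by rewrite mulr_gt0 //; lra.
have np : 0 < n - p by lra.
set lam := Num.min theta (Num.min (dl / 2) ((n - p) / (8 * (s + 1)))).
have l0 : 0 < lam by rewrite !lt_min t0 divr_gt0 //= mulr_gt0 // invr_gt0.
have lt : lam <= theta by rewrite ge_min lexx.
have ld : lam <= dl / 2 by rewrite !ge_min lexx !orbT.
have ln : lam <= (n - p) / (8 * (s + 1)) by rewrite !ge_min lexx !orbT.
have ln' : lam * (8 * (s + 1)) <= n - p by rewrite -ler_pdivlMr.
have hd := drift_sum _ _ _ d0 l0 ld hB.
rewrite hP hN -/s in hd.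
exists lam, (Num.max (1/2) (1 - lam * (n - p) / 2)); split => //.
split; first by rewrite lt_max; apply/orP; left.
  rewrite gt_max; apply/andP; split; first lra.
  have : 0 < lam * (n - p) by rewrite mulr_gt0.
  lra.
move: hd (Phi0 lam); case: (Phi mu lam) => [r| |] //.
rewrite -!EFinM -!EFinD !lee_fin => hd r0.
rewrite le_max; apply/orP; right.
have : 4 * lam^+2 * s <= lam * (n - p) / 2.
  have : lam * (lam * (8 * (s + 1))) <= lam * (n - p) by rewrite ler_wpM2l // ltW.
  have : 0 <= lam^+2 by rewrite sqr_ge0.
  rewrite expr2; nra.
lra.
Qed.

End Drift.

Section Avoid.
Context (R : realType) (k0 : nat) (mu : int -> int -> R) (mu'' : nat -> int -> int -> R)
  (mu0 : forall a b, 0 <= mu a b)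
  (mu''0 : forall i a b, (i < k0)%N -> 0 <= mu'' i a b)
  (K : nat) (hK : (k0.-1 <= K)%N) (lam rho : R) (l0 : 0 <= lam) (r0 : 0 < rho)
  (hphi : (Phi mu lam <= rho%:E)%E).

Lemma step m x :
  (forall y, (K < y.1)%N -> (avoid1 k0 mu mu'' K m y <= (expR (lam * (y.1%:R - K%:R)) * rho^+m)%:E)%E) ->
  (avoid1 k0 mu mu'' K m.+1 x <=
    (expR (lam * (x.1%:R - K%:R)) * rho^+m)%:E * Phi (krow R k0 mu mu'' x.1) lam)%E.
Proof.
move=> IH /=.
set c := expR (lam * (x.1%:R - K%:R)) * rho^+m.
have c0 : 0 <= c by rewrite mulr_ge0 ?expR_ge0 // exprn_ge0 // ltW.
apply: (@le_trans _ _ (\esum_(y in [set: nat * int])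
   (c%:E * (kerZ1 k0 mu mu'' x y * expR (lam * (y.1%:R - x.1%:R)))%:E))%E).
  apply: le_esum => y _; case: ifP => hy; last first.
    by rewrite mule0 mule_ge0 // lee_fin mulr_ge0 ?expR_ge0 ?kerZ10.
  apply: le_trans (lee_wpmul2l _ (IH y hy)) _; first by rewrite lee_fin kerZ10.
  rewrite -!EFinM lee_fin le_eqVlt; apply/orP; left; apply/eqP.
  have -> : expR (lam * (y.1%:R - K%:R)) = expR (lam * (x.1%:R - K%:R)) * expR (lam * (y.1%:R - x.1%:R)).
    by rewrite -expRD; congr expR; ring.
  rewrite /c; ring.
apply: le_trans (esumZ_le _ _ _ c0 _) _.
  by move=> y; rewrite lee_fin mulr_ge0 ?expR_ge0 ?kerZ10.
apply: lee_wpmul2l; first by rewrite lee_fin.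
exact: L1.
Qed.

Lemma bound_gt m : forall x, (K < x.1)%N ->
  (avoid1 k0 mu mu'' K m x <= (expR (lam * (x.1%:R - K%:R)) * rho^+m)%:E)%E.
Proof.
elim: m => [|m IH] x hx.
  rewrite /= expr0 mulr1 lee_fin -[X in X <= _]expR0 ler_expR; apply: mulr_ge0 => //.
  by rewrite subr_ge0 ler_nat ltnW.
apply: (le_trans (step m x IH)).
have -> : krow R k0 mu mu'' x.1 = mu.
  rewrite /krow ifT //.
  by move: hK hx; case: k0 => [|k] //=; lia.
apply: (@le_trans _ _ ((expR (lam * (x.1%:R - K%:R)) * rho^+m)%:E * rho%:E)%E).
  apply: lee_wpmul2l => //; rewrite lee_fin; apply: mulr_ge0; [exact: expR_ge0 | apply: exprn_ge0; exact: ltW].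
by rewrite -EFinM exprSr mulrA.
Qed.

End Avoid.

Theorem lemma5p2 (R : realType) (k0 : nat)
  (mu : int -> int -> R) (mu' mu'' : nat -> int -> int -> R)
  (muij : nat -> nat -> int -> int -> R)
  (hk0 : (1 <= k0)%N)
  (Pmu : is_prob mu)
  (Pmu' : forall j, (j < k0)%N -> is_prob (mu' j))
  (Pmu'' : forall i, (i < k0)%N -> is_prob (mu'' i))
  (Pmuij : forall i j, (i < k0)%N -> (j < k0)%N -> is_prob (muij i j))
  (A1mu : forall a b, (a < - k0%:Z \/ b < - k0%:Z) -> mu a b = 0)
  (A1mu' : forall j a b, (j < k0)%N -> (a < - k0%:Z \/ b < - j%:Z) -> mu' j a b = 0)
  (A1mu'' : forall i a b, (i < k0)%N -> (b < - k0%:Z \/ a < - i%:Z) -> mu'' i a b = 0)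
  (A1muij : forall i j a b, (i < k0)%N -> (j < k0)%N ->
     (a < - i%:Z \/ b < - j%:Z) -> muij i j a b = 0)
  (A2 : exists (dl gm C : R), 0 < dl /\ 0 < gm /\ 0 < C /\
     forall x : nat * nat,
       (\esum_(y in [set: nat * nat])
          (kerZ k0 mu mu' mu'' muij x y *
           expR (dl * (y.1%:R - x.1%:R) + gm * (y.2%:R - x.2%:R)))%:E <= C%:E)%E)
  (A3Z0 : irreducible (kerZ0 mu))
  (A3Z1 : irreducible (kerZ1 k0 mu mu''))
  (A3Z2 : irreducible (kerZ2 k0 mu mu'))
  (A3Z : irreducible (kerZ k0 mu mu' mu'' muij))
  (hm1 : (m1 mu < 0%E)%E)
  (theta : R) (htheta : 0 < theta) :
  exists (C dl : R), 0 < C /\ 0 < dl /\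
    forall (i : nat) (j : int) (k n : nat),
      (probT1_ge k0 mu mu'' k n (i, j) <= (C * expR (theta * i%:R - dl * n%:R))%:E)%E.
Proof.
have mu0 : forall a b, 0 <= mu a b := Pmu.1.
have mu''0 : forall i a b, (i < k0)%N -> 0 <= mu'' i a b.
  by move=> i a b hi; exact: (Pmu'' i hi).1.
have [dl [gm [C [d0 [g0 [C0 hA]]]]]] := A2.
set B := expR ((dl + gm) * k0%:R) * C.
have B0 : 0 < B by rewrite mulr_gt0 ?expR_gt0.
have hmuB : forall lam, 0 <= lam -> lam <= dl -> (Phi mu lam <= B%:E)%E.
  move=> lam l0 l1; apply: (@L2 R k0 mu mu' mu'' muij mu k0 dl gm C lam) => //.
  - by move=> y; rewrite /kerZ /= leqnn.
have hmu''B : forall i lam, (i < k0)%N -> 0 <= lam -> lam <= dl ->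
    (Phi (mu'' i) lam <= B%:E)%E.
  move=> i lam hi l0 l1; apply: (@L2 R k0 mu mu' mu'' muij (mu'' i) i dl gm C lam) => //.
  - exact: ltnW.
  - by move=> a b; apply: mu''0.
  - by move=> a b [h|h]; apply: A1mu'' => //; [right | left].
  - by move=> y; rewrite /kerZ /= leqnn leqNgt hi.
have [lam [rho [l0 lt ld [r0 r1] hphi]]] :=
  @drift_exists R k0 mu Pmu A1mu dl B theta d0 htheta hm1 (hmuB dl (ltW d0) (lexx dl)).
have ldl : lam <= dl by lra.
set dlt := - ln rho.
have dlt0 : 0 < dlt by rewrite /dlt oppr_gt0 ln_lt0 // r0 r1.
have rhoE : rho = expR (- dlt) by rewrite /dlt opprK lnK.
set B1 := Num.max B 1.
have B11 : 1 <= B1 by rewrite le_max lexx orbT.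
exists (B1 * expR (2 * dlt)), dlt; split; first by rewrite mulr_gt0 ?expR_gt0 //; lra.
split => // i j k n.
rewrite /probT1_ge.
set K := maxn k0.-1 k.
have hK : (k0.-1 <= K)%N by rewrite leq_maxl.
have i0 : 0 <= i%:R :> R by rewrite ler0n.
case: n => [|[|m]] /=.
- rewrite lee_fin mulr0 subr0 -mulrA -expRD.
  have : 1 <= expR (2 * dlt + theta * i%:R).
    rewrite -[X in X <= _]expR0 ler_expR; apply: addr_ge0; [lra | by apply: mulr_ge0 => //; lra].
  move=> h; apply: (le_trans h); rewrite ler_peMl //; exact: expR_ge0.
- rewrite lee_fin mulr1 -mulrA -expRD.
  have : 1 <= expR (2 * dlt + (theta * i%:R - dlt)).
    rewrite -[X in X <= _]expR0 ler_expR; have : 0 <= theta * i%:R by apply: mulr_ge0 => //; lra.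
    lra.
  move=> h; apply: (le_trans h); rewrite ler_peMl //; exact: expR_ge0.
have hst := @step R k0 mu mu'' mu0 mu''0 K lam rho r0 m (i, j) (@bound_gt R k0 mu mu'' mu0 mu''0 K hK lam rho (ltW l0) r0 hphi m).
apply: (le_trans hst) => /=.
apply: (@le_trans _ _ ((expR (lam * (i%:R - K%:R)) * rho ^+ m)%:E * B1%:E)%E).
  apply: lee_wpmul2l; first by rewrite lee_fin mulr_ge0 ?expR_ge0 // exprn_ge0 // ltW.
  apply: (@le_trans _ _ B%:E); last by rewrite lee_fin le_max lexx.
  rewrite /krow; case: leqP => hi.
    exact: hmuB (ltW l0) ldl.
  exact: hmu''B hi (ltW l0) ldl.
rewrite -EFinM lee_fin rhoE -expRM_natl.
have B1p : 0 <= B1 by lra.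
rewrite -expRD (mulrC _ B1) -mulrA -expRD ler_wpM2l //.
rewrite ler_expR -addn2 natrD.
have : 0 <= lam * K%:R by apply: mulr_ge0; [exact: ltW | exact: ler0n].
have : lam * i%:R <= theta * i%:R by rewrite ler_wpM2r.
lra.
Qed.
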